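(* For all integers $m\ge1$ and $n\ge1$, $$M(\mathcal G(m,-2-n))=\epsilon_{m,n}\,T(m,n),$$ where $T(m,n)$ is the number of perfect matchings of the $m$-by-$n$ grid graph and $\epsilon_{m,n}=-1$ if $m\equiv2\pmod 4$ and $n$ is odd, $\epsilon_{m,n}=+1$ otherwise. Moreover, every perfect matching of $\mathcal G(m,-2-n)$ has the same sign $\epsilon_{m,n}$.
   Context: Grid conventions: an $m$-by-$N$ grid has vertices $(i,j)$, $1\le i\le m$ (rows), $1\le j\le N$ (columns); horizontal edges join $(i,j),(i,j+1)$, vertical edges join $(i,j),(i+1,j)$. A signed graph is a graph each of whose edges carries a sign $+1$ or $-1$. For a signed graph $\mathcal G$, $M(\mathcal G)$ denotes the sum over all perfect matchings of $\mathcal G$ of the product of the signs of the edges in the matching. For $n\le 0$, $\mathcal G(m,n)$ has the vertex set of the $m$-by-$(2-n)$ grid, all horizontal edges of that grid with sign $+1$, the vertical edges lying in columns $2,3,\dots,1-n$ with sign $-1$, and no vertical edges in columns $1$ and $2-n$. *)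

(* Defs.v *)
From mathcomp Require Import all_boot all_order all_algebra.
Set Implicit Arguments. Unset Strict Implicit. Unset Printing Implicit Defensive.
Import GRing.Theory Num.Theory.
Local Open Scope ring_scope.

(* Vertices of an m-by-N grid: pairs (i,j) with i : 'I_m the row and
   j : 'I_N the column, 0-indexed (paper's (i+1, j+1)). *)
Definition gridV (m N : nat) := ('I_m * 'I_N)%type.

Definition hadj m N (u v : gridV m N) : bool :=
  (u.1 == v.1) && (u.2.+1 == v.2 :> nat).
Definition vadj m N (u v : gridV m N) : bool :=
  (u.2 == v.2) && (u.1.+1 == v.1 :> nat).

(* A graph on a finite vertex type is given by its edge set, each edge being
   a 2-element vertex set.  A perfect matching is a set of edges covering
   every vertex exactly once. *)
Definition perfect_matching (V : finType) (E M : {set {set V}}) : bool :=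
  (M \subset E) && [forall v : V, #|[set e in M | v \in e]| == 1%N].

Definition matching_sign (V : finType) (s : {set V} -> int) (M : {set {set V}}) : int :=
  \prod_(e in M) s e.

Definition signed_matching_sum (V : finType) (E : {set {set V}})
  (s : {set V} -> int) : int :=
  \sum_(M : {set {set V}} | perfect_matching E M) matching_sign s M.

Definition grid_edges m N : {set {set gridV m N}} :=
  [set [set u; v] | u in [set: gridV m N], v in [set: gridV m N] & hadj u v || vadj u v].

Definition T (m n : nat) : nat :=
  #|[set M : {set {set gridV m n}} | perfect_matching (grid_edges m n) M]|.

(* The signed graph G(m,n) for n <= 0: grid with 2-n columns. *)
Definition Gcols (n : int) : nat := `|2 - n|%N.

Definition G_horiz m (n : int) : {set {set gridV m (Gcols n)}} :=
  [set [set u; v] | u in [set: gridV m (Gcols n)], v in [set: gridV m (Gcols n)]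
     & hadj u v].
(* vertical edges only in (1-indexed) columns 2,...,1-n, i.e. 0-indexed
   columns 1,...,(Gcols n) - 2 *)
Definition G_vert m (n : int) : {set {set gridV m (Gcols n)}} :=
  [set [set u; v] | u in [set: gridV m (Gcols n)], v in [set: gridV m (Gcols n)]
     & [&& vadj u v, (1 <= u.2)%N & (u.2 <= (Gcols n).-2)%N]].

Definition G_edges m (n : int) := G_horiz m n :|: G_vert m n.

Definition G_sign m (n : int) (e : {set gridV m (Gcols n)}) : int :=
  if e \in G_vert m n then -1 else 1.

Definition MG (m : nat) (n : int) : int :=
  signed_matching_sum (G_edges m n) (@G_sign m n).

Definition eps (m n : nat) : int :=
  if (m %% 4 == 2)%N && odd n then -1 else 1.

(* Main.v *)
Require Import Defs.
From mathcomp Require Import all_boot all_order all_algebra.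
From mathcomp Require Import zify.
Set Implicit Arguments. Unset Strict Implicit. Unset Printing Implicit Defensive.
Import GRing.Theory Num.Theory.
Local Open Scope ring_scope.

Lemma mem_es (V : finType) (P : V -> V -> bool) (e : {set V}) :
  reflect (exists u v, P u v /\ e = [set u; v])
    (e \in [set [set u; v] | u in [set: V], v in [set: V] & P u v]).
Proof.
apply: (iffP idP).
  by case/imset2P => u v _; rewrite inE => /andP[_ H] ->; exists u, v.
case=> u [v [H ->]].
by apply: (@imset2_f _ _ _ (fun u v => [set u; v]) _ _ u v); rewrite !inE ?H.
Qed.

Lemma PM_uniq (V : finType) (E M : {set {set V}}) e1 e2 x :
  perfect_matching E M -> e1 \in M -> e2 \in M -> x \in e1 -> x \in e2 -> e1 = e2.
Proof.
case/andP=> _ /forallP/(_ x)/cards1P[e0 He0] h1 h2 x1 x2.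
have : e1 \in [set e in M | x \in e] by rewrite inE h1 x1.
have : e2 \in [set e in M | x \in e] by rewrite inE h2 x2.
by rewrite He0 !inE => /eqP -> /eqP ->.
Qed.

Lemma PM_ex (V : finType) (E M : {set {set V}}) x :
  perfect_matching E M -> exists2 e, e \in M & x \in e.
Proof.
case/andP=> _ /forallP/(_ x)/cards1P[e0 He0].
have : e0 \in [set e in M | x \in e] by rewrite He0 set11.
by rewrite inE => /andP[h1 h2]; exists e0.
Qed.

Lemma PM_triv (V : finType) (E M : {set {set V}}) :
  perfect_matching E M -> trivIset M.
Proof.
move=> pm; apply/trivIsetP => A B hA hB nAB.
apply/pred0P => x /=; apply/negP => /andP[xA xB].
by move: nAB; rewrite (PM_uniq pm hA hB xA xB) eqxx.
Qed.

Lemma PM_cover (V : finType) (E M : {set {set V}}) :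
  perfect_matching E M -> cover M = [set: V].
Proof.
move=> pm; apply/setP => x; rewrite inE; apply/bigcupP.
by case: (PM_ex x pm) => e he xe; exists e.
Qed.

Lemma PM_prod (V : finType) (E M : {set {set V}}) (g : V -> int) :
  perfect_matching E M -> \prod_(e in M) \prod_(x in e) g x = \prod_x g x.
Proof.
move=> pm; rewrite -(big_trivIset _ (PM_triv pm)) (PM_cover pm).
by apply: eq_bigl => x; rewrite inE.
Qed.

Lemma PM_sum (V : finType) (E M : {set {set V}}) (g : V -> nat) :
  perfect_matching E M -> (\sum_(e in M) \sum_(x in e) g x = \sum_x g x)%N.
Proof.
move=> pm; rewrite -(big_trivIset _ (PM_triv pm)) (PM_cover pm).
by apply: eq_bigl => x; rewrite inE.
Qed.


Definition Gh m N : {set {set gridV m N}} :=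
  [set [set u; v] | u in [set: gridV m N], v in [set: gridV m N] & hadj u v].
Definition Gv m N : {set {set gridV m N}} :=
  [set [set u; v] | u in [set: gridV m N], v in [set: gridV m N]
     & [&& vadj u v, (1 <= u.2)%N & (u.2 <= N.-2)%N]].
Definition EG m N := Gh m N :|: Gv m N.
Definition Gs m N (e : {set gridV m N}) : int := if e \in Gv m N then -1 else 1.

Lemma MG_E m k : MG m k = signed_matching_sum (EG m (Gcols k)) (@Gs m (Gcols k)).
Proof. by []. Qed.

Lemma sq_sign (k : nat) : ((-1) ^+ k * (-1) ^+ k = 1 :> int).
Proof. by rewrite -exprMn mulrNN mulr1 expr1n. Qed.

Lemma sign_edge m N (e : {set gridV m N}) :
  e \in EG m N -> Gs e = \prod_(x in e) (-1) ^+ x.1.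
Proof.
rewrite /Gs; case: ifP => [/mem_es [u [v [/and3P[/andP[_ /eqP h] _ _] ->]]] _ | hv].
  rewrite big_setU1 ?big_set1 /=; last first.
    by rewrite inE; apply/negP => /eqP hu; move: h; rewrite hu; lia.
  by rewrite -h exprS mulrCA sq_sign mulr1.
rewrite /EG inE hv orbF => /mem_es [u [v [/andP[/eqP h1 /eqP h2] ->]]].
rewrite big_setU1 ?big_set1 /=; last first.
  by rewrite inE; apply/negP => /eqP hu; move: h2; rewrite hu; lia.
by rewrite h1 sq_sign.
Qed.

Lemma prod_const_ord (n : nat) (c : int) : \prod_(j < n) c = c ^+ n.
Proof. by elim: n => [|n IH]; rewrite ?big_ord0 ?big_ord_recr ?IH ?exprSr. Qed.

Lemma sign_all m N (M : {set {set gridV m N}}) :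
  perfect_matching (EG m N) M ->
  matching_sign (@Gs m N) M = (-1) ^+ ('C(m, 2) * N).
Proof.
move=> pm; rewrite /matching_sign.
rewrite (eq_bigr (fun e : {set gridV m N} => \prod_(x in e) (-1) ^+ x.1)); last first.
  move=> e he; apply: sign_edge.
  by case/andP: pm => /subsetP /(_ e he).
rewrite (PM_prod _ pm).
have -> : \prod_(x : gridV m N) ((-1) ^+ x.1 : int) = \prod_(i < m) \prod_(j < N) (-1) ^+ i.
  by rewrite pair_big.
rewrite (eq_bigr (fun i : 'I_m => ((-1) ^+ i) ^+ N)) => [|i _]; last by rewrite prod_const_ord.
by rewrite prodrXl prodrXr -exprM -bin2_sum big_mkord.
Qed.

Lemma even_card m N (M : {set {set gridV m N}}) :
  perfect_matching (EG m N) M -> ~~ odd (m * N).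
Proof.
move=> pm.
have := PM_sum (fun _ => 1%N) pm.
rewrite (eq_bigr (fun _ => 2%N)); last first.
  move=> e he; rewrite sum1_card.
  case/andP: pm => /subsetP /(_ e he); rewrite /EG inE.
  case/orP=> /mem_es [u [v [H ->]]]; rewrite cards2; case: eqP => // huv; move: H; rewrite huv /hadj /vadj; lia.
rewrite sum1_card card_prod !card_ord => <-.
by rewrite sum_nat_const oddM andbF.
Qed.


Lemma bin2_odd k : odd 'C(k.*2, 2) = (k.*2 %% 4 == 2)%N.
Proof.
rewrite bin2 -doubleMl doubleK.
case: k => [|k] //.
rewrite oddM doubleS /= odd_double andbT.
have := modn2 k; case: (odd k) => /= h; apply/esym; lia.
Qed.

Lemma eps_calc m n : ~~ odd (m * n.+4) -> (-1) ^+ ('C(m,2) * n.+4) = eps m n :> int.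
Proof.
move=> hev; rewrite -signr_odd /eps oddM /= !negbK.
case on: (odd n); last by rewrite !andbF.
have hm : ~~ odd m by move: hev; rewrite oddM /= !negbK on andbT.
rewrite !andbT -(odd_double_half m) (negbTE hm) add0n bin2_odd.
by case: ifP.
Qed.


Lemma gv_eq m k (u v : gridV m k) : u.1 = v.1 -> (u.2 : nat) = v.2 -> u = v.
Proof. by case: u v => [a b] [c d] /= -> /val_inj ->. Qed.

Section Bij.
Variables m n : nat.
Local Notation V := (gridV m n).
Local Notation W := (gridV m n.+4).

Lemma lt2 (x : V) : (x.2 < n)%N.
Proof. exact: ltn_ord. Qed.
Lemma lt2W (x : W) : (x.2 < n.+4)%N.
Proof. exact: ltn_ord. Qed.

Definition sh (x : V) : W := (x.1, inord (x.2 + 2)%N).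

Lemma sh2 x : ((sh x).2 : nat) = (x.2 + 2)%N.
Proof. by rewrite /= inordK //; have := ltn_ord x.2; lia. Qed.

Lemma sh1 x : (sh x).1 = x.1.
Proof. by []. Qed.

Lemma sh_inj : injective sh.
Proof.
move=> x y h; apply: gv_eq; first by rewrite -sh1 h.
by have := sh2 x; rewrite h sh2; lia.
Qed.

Definition bd (w : W) := (w.2 <= 1)%N || (n.+2 <= w.2)%N.

Lemma bd_sh x : ~~ bd (sh x).
Proof. rewrite /bd sh2; have := ltn_ord x.2; lia. Qed.

Lemma unsh w : ~~ bd w -> exists x, w = sh x.
Proof.
rewrite /bd => hb.
have h : (w.2 - 2 < n)%N by have := ltn_ord w.2; lia.
exists (w.1, Ordinal h); apply: gv_eq => //.
by rewrite sh2 /=; lia.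
Qed.

Definition fe (w : W) : {set W} :=
  if (w.2 <= 1)%N then [set (w.1, inord 0); (w.1, inord 1)]
  else [set (w.1, inord n.+2); (w.1, inord n.+3)].

Definition F := [set fe w | w in [set w | bd w]].

Lemma in_fe w x : x \in fe w =
  (x.1 == w.1) && (if (w.2 <= 1)%N then (x.2 <= 1)%N else (n.+2 <= x.2)%N).
Proof.
have hx := ltn_ord x.2.
rewrite /fe; case: ifP => h; rewrite !inE.
  apply/idP/idP.
    case/orP=> /eqP -> /=; rewrite eqxx inordK //.
  case/andP=> /eqP h1 h2; apply/orP.
  have [h0|h0] : ((x.2:nat) = 0 \/ (x.2:nat) = 1)%N by lia.
    by left; apply/eqP; apply: gv_eq => //=; rewrite inordK.
  by right; apply/eqP; apply: gv_eq => //=; rewrite inordK.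
apply/idP/idP.
  by case/orP=> /eqP -> /=; rewrite eqxx inordK //=; lia.
case/andP=> /eqP h1 h2; apply/orP.
have [h0|h0] : ((x.2:nat) = n.+2 \/ (x.2:nat) = n.+3)%N by lia.
  by left; apply/eqP; apply: gv_eq => //=; rewrite inordK.
by right; apply/eqP; apply: gv_eq => //=; rewrite inordK.
Qed.

Lemma fe_self w : bd w -> w \in fe w.
Proof. by rewrite in_fe eqxx /bd; case: ifP => //= ->. Qed.

Lemma fe_mem w x : x \in fe w -> bd x /\ fe x = fe w.
Proof.
rewrite in_fe /bd => /andP[/eqP h1 h2].
split; first by case: ifP h2 => _ ->; rewrite ?orbT.
rewrite /fe h1; case hw: (w.2 <= 1)%N h2 => h2; case hx: (x.2 <= 1)%N => //; lia.
Qed.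


Lemma gv_eqE (u v : W) : (u == v) = (((u.1:nat) == (v.1:nat)) && ((u.2:nat) == (v.2:nat))).
Proof. by case: u v => [a b] [c d]. Qed.

Lemma EG_mem (e : {set W}) : e \in EG m n.+4 ->
  exists u v : W, ((((u.1:nat) == (v.1:nat)) && (((u.2:nat)).+1 == (v.2:nat))) ||
               [&& ((u.2:nat) == (v.2:nat)), ((u.1:nat)).+1 == (v.1:nat), (1 <= (u.2:nat))%N & ((u.2:nat) <= n.+2)%N])
      /\ e = [set u; v].
Proof.
rewrite /EG inE => /orP[] /mem_es [u [v [H ->]]]; exists u, v; split => //; move: H.
  by rewrite /hadj => ->.
by rewrite /vadj /= => /and3P[/andP[/eqP h1 /eqP h2] h3 h4]; rewrite h3 h4 h1 h2 !eqxx orbT.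
Qed.

Lemma F_edge : F \subset EG m n.+4.
Proof.
apply/subsetP => e /imsetP [w _ ->]; rewrite /fe; case: ifP => _;
  rewrite /EG inE; apply/orP; left; apply/mem_es; eexists; eexists; (split; last reflexivity);
  rewrite /hadj /= eqxx /= !inordK //.
Qed.

Lemma EG_end e w0 : e \in EG m n.+4 -> w0 \in e ->
  (((w0.2:nat) == 0) || ((w0.2:nat) == n.+3))%N -> e = fe w0.
Proof.
case/EG_mem => u [v [H ->]]; rewrite !inE => hw hc; apply/setP => x.
rewrite in_fe !inE !gv_eqE.
have := ltn_ord u.2; have := ltn_ord v.2; have := ltn_ord x.2.
move: H hw hc; rewrite !gv_eqE. 
rewrite -[x.1 == w0.1]val_eqE /=. case: ifP => hh; lia.
Qed.

Lemma ord_eqE k (a b : 'I_k) : (a == b) = ((a : nat) == b).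
Proof. by []. Qed.

Lemma sh_set2 u v : sh @: [set u; v] = [set sh u; sh v].
Proof. by rewrite imsetU1 imset_set1. Qed.

Lemma sh_edge e : e \in grid_edges m n -> sh @: e \in EG m n.+4.
Proof.
case/mem_es => u [v [H ->]]; rewrite sh_set2 /EG inE.
have hu := lt2 u; have hv := lt2 v.
case/orP: H => /andP[/eqP h1 /eqP h2]; apply/orP; [left|right]; apply/mem_es; exists (sh u), (sh v); split => //.
  rewrite /hadj !sh1 h1 eqxx /= !sh2. apply/eqP. lia.
rewrite /vadj !sh1 /= !sh2 -h2 eqxx andbT.
by rewrite h1 eqxx /=; apply/andP; split; lia.
Qed.

Lemma sh_edge_inv (e : {set V}) : sh @: e \in EG m n.+4 -> e \in grid_edges m n.
Proof.
case/EG_mem => u [v [H he]].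
have hu : u \in sh @: e by rewrite he !inE eqxx.
have hv : v \in sh @: e by rewrite he !inE eqxx orbT.
case/imsetP: hu he H => u0 hu0 -> he H; case/imsetP: hv he H => v0 hv0 -> he H.
have -> : e = [set u0; v0] by apply: (imset_inj sh_inj); rewrite he sh_set2.
apply/mem_es; exists u0, v0; split => //.
move: H; rewrite /hadj /vadj !ord_eqE !sh2 !sh1; lia.
Qed.

Lemma int_edge (e' : {set W}) : e' \in EG m n.+4 -> (forall y, y \in e' -> ~~ bd y) ->
  exists e : {set V}, e' = sh @: e.
Proof.
case/EG_mem => u [v [_ ->]] h.
have [u0 hu0] := unsh (h u (set21 _ _)).
have [v0 hv0] := unsh (h v (set22 _ _)).
by exists [set u0; v0]; rewrite sh_set2 hu0 hv0.
Qed.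

Lemma shF (e : {set V}) : sh @: e \notin F.
Proof.
apply/negP => /imsetP [w]; rewrite inE => hb he.
have := fe_self hb; rewrite -he => /imsetP [x _ hx].
by move: hb; rewrite hx (negbTE (bd_sh x)).
Qed.

Definition phi (M : {set {set V}}) : {set {set W}} := [set sh @: e | e : {set V} in M] :|: F.

Lemma phiK M (e : {set V}) : (sh @: e \in phi M) = (e \in M).
Proof.
rewrite inE (negbTE (shF e)) orbF mem_imset //.
exact: imset_inj sh_inj.
Qed.

Lemma phi_inj : injective phi.
Proof. by move=> M1 M2 h; apply/setP => e; rewrite -!phiK h. Qed.

Lemma phi_PM M : perfect_matching (grid_edges m n) M ->
  perfect_matching (EG m n.+4) (phi M).
Proof.
move=> pm; apply/andP; split.
  apply/subsetP => e; rewrite inE => /orP[/imsetP [e0 he0 ->]|hF].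
    by apply: sh_edge; case/andP: pm => /subsetP h _; apply: h.
  exact: (subsetP F_edge).
apply/forallP => w; apply/cards1P.
case hb: (bd w).
  exists (fe w); apply/setP => e; rewrite !inE; apply/andP/eqP.
    case=> /orP[/imsetP[e0 _ ->]| /imsetP[x hx ->]] hw.
      by case/imsetP: hw => x _ hx; move: hb; rewrite hx (negbTE (bd_sh x)).
    by have [_ ->] := fe_mem hw.
  move ->; split; last exact: fe_self.
  by apply/orP; right; apply: imset_f; rewrite inE.
case: (unsh (negbT hb)) => x ->.
case/andP: pm => _ /forallP/(_ x)/cards1P[e0 He0].
exists (sh @: e0); apply/setP => e; rewrite !inE; apply/andP/eqP.
  case=> /orP[/imsetP[e1 he1 ->] | /imsetP[y hy ->]] hw.
    rewrite mem_imset in hw; last exact: sh_inj.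
    have : e1 \in [set e in M | x \in e] by rewrite inE he1 hw.
    by rewrite He0 inE => /eqP ->.
  by have [/negP] := fe_mem hw; rewrite (negbTE (bd_sh x)).
move ->; have : e0 \in [set e in M | x \in e] by rewrite He0 set11.
rewrite inE => /andP[h1 h2]; split; first by apply/orP; left; apply: imset_f.
by rewrite mem_imset //; exact: sh_inj.
Qed.

Lemma PM_sub (M' : {set {set W}}) e : perfect_matching (EG m n.+4) M' -> e \in M' -> e \in EG m n.+4.
Proof. by case/andP => /subsetP h _ /h. Qed.

Lemma feM M' w : perfect_matching (EG m n.+4) M' -> bd w -> fe w \in M'.
Proof.
move=> pm hb.
pose w0 : W := (w.1, if (w.2 <= 1)%N then inord 0 else inord n.+3).
have h0 : w0 \in fe w.
  by rewrite in_fe /w0 /= eqxx; case hw: (w.2 <= 1)%N; rewrite /= inordK //; lia.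
case: (PM_ex w0 pm) => e0 he0 hw0.
have := EG_end (PM_sub pm he0) hw0.
have -> : ((w0.2:nat) == 0)%N || ((w0.2:nat) == n.+3) by rewrite /w0 /=; case: ifP => _; rewrite inordK ?eqxx ?orbT //; lia.
move=> /(_ isT) h; have [_ h'] := fe_mem h0.
by rewrite -h' -h.
Qed.

Lemma PM_bd M' e w : perfect_matching (EG m n.+4) M' -> e \in M' -> w \in e -> bd w -> e = fe w.
Proof. by move=> pm he hw hb; apply: PM_uniq pm he (feM pm hb) hw (fe_self hb). Qed.

Definition psi (M' : {set {set W}}) : {set {set V}} := [set e : {set V} | sh @: e \in M'].

Lemma psi_PM M' : perfect_matching (EG m n.+4) M' -> perfect_matching (grid_edges m n) (psi M').
Proof.
move=> pm; apply/andP; split.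
  by apply/subsetP => e; rewrite inE => he; apply: sh_edge_inv; apply: PM_sub pm he.
apply/forallP => x; apply/cards1P.
case: (PM_ex (sh x) pm) => e' he' hx.
have [e he] : exists e : {set V}, e' = sh @: e.
  apply: int_edge; first exact: PM_sub pm he'.
  move=> y hy; apply/negP => hb; have h := PM_bd pm he' hy hb.
  rewrite h in hx; have [/negP] := fe_mem hx; by rewrite (negbTE (bd_sh x)).
subst e'; exists e; apply/setP => e1; rewrite !inE; apply/andP/eqP.
  case=> h1 h2; apply: (imset_inj sh_inj).
  by apply: PM_uniq pm h1 he' (imset_f _ h2) hx.
move ->; split => //.
by rewrite mem_imset in hx; last exact: sh_inj.
Qed.

Lemma phi_psi M' : perfect_matching (EG m n.+4) M' -> phi (psi M') = M'.
Proof.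
move=> pm; apply/setP => e'; rewrite inE; apply/orP/idP.
  case=> [/imsetP[e]|/imsetP[w]]; rewrite inE.
    by move=> he ->.
  by move=> hb ->; exact: feM pm hb.
move=> he'; case hb: [exists y in e', bd y].
  case/existsP: hb => y /andP[hy hb]; right.
  by rewrite (PM_bd pm he' hy hb); apply: imset_f; rewrite inE.
left; have [e he] : exists e : {set V}, e' = sh @: e.
  apply: int_edge; first exact: PM_sub pm he'.
  move=> y hy; apply/negP => hby; move/negbT: hb => /existsPn /(_ y).
  by rewrite hy hby.
by subst e'; apply: imset_f; rewrite inE.
Qed.

Lemma card_bij : #|[set M | perfect_matching (EG m n.+4) M]| =
  #|[set M | perfect_matching (grid_edges m n) M]|.
Proof.
have -> : [set M | perfect_matching (EG m n.+4) M] =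
   phi @: [set M | perfect_matching (grid_edges m n) M].
  apply/setP => M'; rewrite inE; apply/idP/imsetP.
    by move=> pm; exists (psi M'); [rewrite inE; exact: psi_PM | rewrite phi_psi].
  by case=> M; rewrite inE => pm ->; exact: phi_PM.
by rewrite card_imset //; exact: phi_inj.
Qed.

End Bij.


Lemma main_gen m n N : N = n.+4 ->
  signed_matching_sum (EG m N) (@Gs m N) = eps m n * (T m n)%:Z /\
  (forall M, perfect_matching (EG m N) M -> matching_sign (@Gs m N) M = eps m n).
Proof.
move=> hN; subst N.
have part2 : forall M, perfect_matching (EG m n.+4) M -> matching_sign (@Gs m n.+4) M = eps m n.
  by move=> M pm; rewrite sign_all //; apply: eps_calc; exact: even_card pm.
split => //.
rewrite /signed_matching_sum (eq_bigr (fun _ => eps m n)) => [|M pm]; last exact: part2.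
have -> : \sum_(M | perfect_matching (EG m n.+4) M) eps m n =
          \sum_(M in [set M | perfect_matching (EG m n.+4) M]) eps m n.
  by apply: eq_bigl => M; rewrite inE.
by rewrite sumr_const card_bij /T -mulr_natr natz.
Qed.

Lemma Gcols_eq n : Gcols (- 2 - n%:Z) = n.+4.
Proof.
rewrite /Gcols; have -> : 2 - (- 2 - n%:Z) = (n.+4)%:Z by lia.
by [].
Qed.

Theorem mainTheorem7 (m n : nat) :
  (1 <= m)%N -> (1 <= n)%N ->
  MG m (- 2 - n%:Z) = eps m n * (T m n)%:Z /\
  (forall M : {set {set gridV m (Gcols (- 2 - n%:Z))}},
     perfect_matching (G_edges m (- 2 - n%:Z)) M ->
     matching_sign (@G_sign m (- 2 - n%:Z)) M = eps m n).
Proof.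
move=> _ _; exact: (main_gen m (Gcols_eq n)).
Qed.
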